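(* Let $G$ be a graph and let $P=\langle p_1,\dots,p_m\rangle$ and $Q=\langle q_1,\dots,q_n\rangle$ be vertex-disjoint induced paths in $G$ such that $\mathrm{tw}\big(G[V(P)\cup V(Q)]\cup\{p_1q_1,p_mq_n\}\big)\le 2$. Then for every $i,j$ with $p_iq_j\in E(G)$, the set $\{p_i,q_j\}$ separates $\{p_1,\dots,p_{i-1}\}\cup\{q_1,\dots,q_{j-1}\}$ from $\{p_{i+1},\dots,p_m\}\cup\{q_{j+1},\dots,q_n\}$ in $G[V(P)\cup V(Q)]$.
   Context: $\mathrm{tw}$ is treewidth. A path is induced if it is an induced subgraph. For a graph $F$ and a set of vertex pairs $E'$, $F\cup E'$ is $F$ with these pairs added as edges. A set $S$ separates $A$ from $B$ (disjoint from $S$) if no path in the graph minus $S$ joins a vertex of $A$ to a vertex of $B$. *)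

(* Defs.v *)
From mathcomp Require Import all_boot.
Set Implicit Arguments. Unset Strict Implicit. Unset Printing Implicit Defensive.

(* A (finite simple) graph is given by a vertex set V : {set T} on a finType T
   and an edge relation E : rel T (only edges between vertices of V matter). *)

Definition simple_graph (T : finType) (e : rel T) : Prop :=
  symmetric e /\ irreflexive e.

(* A finite tree: symmetric irreflexive relation on a nonempty finType which is
   connected and has exactly #|I| - 1 (unordered) edges. *)
Definition is_tree (I : finType) (t : rel I) : Prop :=
  [/\ symmetric t, irreflexive t, 0 < #|I|,
      (forall i j, connect t i j) &
      #|[set p : I * I | t p.1 p.2]| = 2 * (#|I|).-1].

Definition tree_decomposition (T : finType) (V : {set T}) (E : rel T)
    (I : finType) (t : rel I) (B : I -> {set T}) : Prop :=
  [/\ is_tree t,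
      (forall i, B i \subset V),
      (forall v, v \in V -> exists i, v \in B i),
      (forall u v, u \in V -> v \in V -> E u v -> exists i, (u \in B i) && (v \in B i)) &
      (forall v i j, v \in B i -> v \in B j ->
         connect [rel a b | t a b && (v \in B a) && (v \in B b)] i j)].

Definition tw_le (T : finType) (V : {set T}) (E : rel T) (k : nat) : Prop :=
  exists (I : finType) (t : rel I) (B : I -> {set T}),
    tree_decomposition V E t B /\ forall i, #|B i| <= k.+1.

Definition induced_rel (T : finType) (e : rel T) (S : {set T}) : rel T :=
  [rel x y | e x y && (x \in S) && (y \in S)].

Definition induced_path (T : finType) (e : rel T) (P : seq T) : Prop :=
  [/\ 0 < size P, uniq P &
      forall k l : 'I_(size P),
        e (tnth (in_tuple P) k) (tnth (in_tuple P) l) =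
        ((k.+1 == l) || (l.+1 == k))].

Definition separates (T : finType) (V : {set T}) (E : rel T)
    (X A B : {set T}) : Prop :=
  forall a b, a \in A -> b \in B ->
    ~~ connect [rel x y | E x y && (x \in V :\: X) && (y \in V :\: X)] a b.

Definition add2edges (T : finType) (F : rel T) (x1 y1 x2 y2 : T) : rel T :=
  [rel x y | [|| F x y, (x == x1) && (y == y1), (x == y1) && (y == x1),
                 (x == x2) && (y == y2) | (x == y2) && (y == x2)]].

(* Main.v *)
Require Import Defs.
From mathcomp Require Import all_boot.
From mathcomp Require Import zify.
From Stdlib Require Import Lia.
Section Helpers.
End Helpers.
Set Implicit Arguments. Unset Strict Implicit. Unset Printing Implicit Defensive.

Definition rst (I : finType) (t : rel I) (A : {set I}) : rel I :=
  [rel a b | t a b && (a \in A) && (b \in A)].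
Definition conn_in (I : finType) (t : rel I) (A : {set I}) : Prop :=
  forall x y, x \in A -> y \in A -> connect (rst t A) x y.
Definition nedges (I : finType) (t : rel I) (W : {set I}) : nat :=
  #|[set p : I * I | t p.1 p.2 && (p.1 \in W) && (p.2 \in W)]|.

Lemma rst_sym (I : finType) (t : rel I) A : symmetric t -> symmetric (rst t A).
Proof. by move=> st x y; rewrite /rst /= (st x y); case: (x \in A); case: (y \in A); rewrite ?andbF. Qed.

Lemma rm_conn (I : finType) (t : rel I) (A : {set I}) l :
  symmetric t ->
  (forall u v, u \in A -> v \in A -> t l u -> t l v -> u = v) ->
  forall x y, x \in A :\ l -> y \in A :\ l ->
  connect (rst t A) x y -> connect (rst t (A :\ l)) x y.
Proof.
move=> st uniqn x y xA yA /connectP[p0 pp0 ey].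
move: yA; rewrite ey; case: (shortenP pp0) => p pth up _ yA.
have xl : x != l by move: xA; rewrite !inE => /andP[].
have nl : l \notin x :: p.
  apply/negP => lin.
  have lp : l \in p by move: lin; rewrite inE eq_sym (negbTE xl).
  case/splitPr: lp pth up yA => p1 p2.
  rewrite cat_path /= => /and3P[pa e1 pb] up.
  case: p2 pb up => [|z p2] pb up.
    by rewrite last_cat /= !inE eqxx.
  move=> _.
  move: pb => /= /andP[/andP[/andP[e2 _] zA] _].
  move: e1 => /andP[/andP[e1 uA] _].
  have := uniqn (last x p1) z uA zA; rewrite st => /(_ e1 e2) ezl.
  have up' : uniq (x :: p1 ++ l :: z :: p2) by [].
  move: up'; rewrite -cat_cons cat_uniq => /and3P[_ /hasPn H _].
  have := H z; rewrite !inE eqxx !orbT => /(_ isT).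
  by rewrite -ezl -in_cons mem_last.
apply/connectP; exists p => //.
apply: (sub_in_path (P := [pred z | z != l])) pth; last first.
  by apply/allP => z zin /=; apply/negP => /eqP ezl; rewrite -ezl zin in nl.
move=> u v /= ul vl /andP[/andP[tuv uA] vA].
rewrite !inE in ul vl; by rewrite /rst /= tuv !inE ul vl uA vA.
Qed.

Lemma nedges_sum (I : finType) (t : rel I) (W : {set I}) :
  nedges t W = \sum_(x in W) #|[set y in W | t x y]|.
Proof.
rewrite /nedges -sum1_card.
rewrite (eq_bigl (fun p : I * I => (p.1 \in W) && ((t p.1 p.2) && (p.2 \in W)))); last first.
  by move=> [u v]; rewrite !inE /=; case: (u \in W); case: (v \in W); case: (t u v).
rewrite -(pair_big_dep (fun u => u \in W) (fun u v => t u v && (v \in W)) (fun _ _ => 1)) /=.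
apply: eq_bigr => u _; rewrite -sum1_card; apply: eq_bigl => v.
by rewrite !inE andbC.
Qed.

Lemma leaf_exists (I : finType) (t : rel I) (W : {set I}) n :
  symmetric t -> #|W| = n.+2 -> conn_in t W -> nedges t W = 2 * n.+1 ->
  exists l l', [/\ l \in W, l' \in W, t l l' &
     forall u, u \in W -> t l u -> u = l'].
Proof.
move=> st cW cn ne.
have [l /andP[lW dl]] : exists l, (l \in W) && (#|[set y in W | t l y]| <= 1).
  case: (pickP [pred l | (l \in W) && (#|[set y in W | t l y]| <= 1)]) => [l H|H].
    by exists l.
  have : \sum_(x in W) 2 <= \sum_(x in W) #|[set y in W | t x y]|.
    apply: leq_sum => x xW; move: (H x) => /=; rewrite xW /=.
    by case: #|_| => [|[|]].
  by rewrite -nedges_sum ne sum_nat_const cW; lia.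
have [l' l'W ll'] : exists2 l', l' \in W & t l l'.
  have : 1 < #|W| by rewrite cW.
  case/(card_gt1P (A:=W)) => [a [b [aW bW ab]]].
  have [y yW yl] : exists2 y, y \in W & y != l.
    case: (eqVneq a l) => [eal|nal]; last by exists a.
    by exists b => //; rewrite -eal eq_sym.
  case/connectP: (cn l y lW yW) => [[|z p]] /=.
    by move=> _ eyl; rewrite eyl eqxx in yl.
  by move=> /andP[/andP[/andP[tlz _] zW] _] _; exists z.
exists l, l'; split => // u uW tlu.
have : [set y in W | t l y] = [set l'].
  apply/eqP; rewrite eq_sym eqEcard sub1set inE l'W ll' /= cards1 dl.
  done.
move/setP => /(_ u); rewrite !inE uW tlu /= => /esym/eqP; done.
Qed.

Lemma nedges_rm (I : finType) (t : rel I) (W : {set I}) l l' :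
  symmetric t -> irreflexive t -> l \in W -> l' \in W -> t l l' ->
  (forall u, u \in W -> t l u -> u = l') ->
  nedges t (W :\ l) = nedges t W - 2.
Proof.
move=> st irr lW l'W tll' un.
have ll' : l != l' by apply/eqP => e; rewrite e irr in tll'.
rewrite /nedges.
set E := [set p : I * I | t p.1 p.2 && (p.1 \in W) && (p.2 \in W)].
have -> : [set p : I * I | t p.1 p.2 && (p.1 \in W :\ l) && (p.2 \in W :\ l)]
   = E :\: [set (l, l'); (l', l)].
  apply/setP => [[u v]]; rewrite !inE /= !xpair_eqE /=.
  case: (eqVneq u l) => [->|ul].
    rewrite /= andbF /= lW andbT; case tv: (t l v) => //=; case vW: (v \in W); rewrite ?andbF //.
    by rewrite (un v vW tv) eqxx.
  rewrite /=.
  case: (eqVneq v l) => [->|vl]; last by rewrite andbF.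
  rewrite andbT lW andbT /=; case tu: (t u l) => //=; case uW: (u \in W); rewrite ?andbF //=.
  by rewrite st in tu; rewrite (un u uW tu) eqxx.
rewrite cardsD (setIidPr _) ?cards2; last first.
  by apply/subsetP => z; rewrite !inE => /orP[]/eqP -> /=; rewrite ?lW ?l'W ?tll' // st tll'.
suff -> : ((l, l') != (l', l)) by [].
by rewrite xpair_eqE negb_and ll'.
Qed.

Lemma helly (I K : finType) (t : rel I) : symmetric t -> irreflexive t ->
  forall n (W : {set I}), #|W| = n.+1 -> conn_in t W -> nedges t W = 2 * n ->
  forall S : K -> {set I}, (forall k, S k \subset W) -> (forall k, conn_in t (S k)) ->
  (forall k m, S k :&: S m != set0) -> exists c, forall k, c \in S k.
Proof.
move=> st irr; elim=> [|n IH] W cW cn ne S sub cS inter.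
  have /cards1P[w eW] : #|W| == 1 by rewrite cW.
  exists w => k.
  case/set0Pn: (inter k k) => x; rewrite setIid => xS.
  by have := subsetP (sub k) x xS; rewrite eW inE => /eqP <-.
have [l [l' [lW l'W tll' un]]] := leaf_exists st cW cn ne.
have ll' : l != l' by apply/eqP => e; rewrite e irr in tll'.
have un2 : forall u v, u \in W -> v \in W -> t l u -> t l v -> u = v.
  by move=> u v uW vW tu tv; rewrite (un u uW tu) (un v vW tv).
pose W' := W :\ l.
have cW' : #|W'| = n.+1 by move: cW; rewrite (cardsD1 l W) lW; case.
have cn' : conn_in t W'.
  move=> x y xW yW; apply: rm_conn => //; apply: cn.
    by move: xW; rewrite !inE => /andP[].
  by move: yW; rewrite !inE => /andP[].
have ne' : nedges t W' = 2 * n by rewrite /W' (nedges_rm st irr lW l'W tll' un) ne; lia.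
pose S' k := if S k == [set l] then [set l'] else S k :\ l.
have l'S : forall k, l \in S k -> S k != [set l] -> l' \in S k.
  move=> k lS nS.
  have [x xS xl] : exists2 x, x \in S k & x != l.
    case: (pickP [pred x | (x \in S k) && (x != l)]) => [x /andP[]|H]; first by exists x.
    case/eqP: nS; apply/setP => z; rewrite inE; apply/idP/idP => [zS|/eqP ->//].
    by move: (H z) => /=; rewrite zS /= => /negbFE.
  case/connectP: (cS k l x lS xS) => [[|z p]] /=.
    by move=> _ exl; rewrite exl eqxx in xl.
  move=> /andP[/andP[/andP[tlz _] zS] _] _.
  by rewrite -(un z (subsetP (sub k) z zS) tlz).
have memS' : forall k x, x \in S k -> (if x == l then l' else x) \in S' k.
  move=> k x xS; rewrite /S'; case: (eqVneq (S k) [set l]) => [eS|nS].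
    by move: xS; rewrite eS inE => /eqP ->; rewrite eqxx inE.
  case: (eqVneq x l) => [exl|xl]; last by rewrite !inE xl.
  by rewrite !inE eq_sym ll' /= l'S // -exl.
have [c Hc] : exists c, forall k, c \in S' k.
  apply: (IH W' cW' cn' ne' S').
  - move=> k; rewrite /S'; case: ifP => _.
      by rewrite sub1set !inE eq_sym ll'.
    by apply: setSD.
  - move=> k; rewrite /S'; case: ifP => _.
      by move=> x y; rewrite !inE => /eqP -> /eqP ->; apply: connect0.
    move=> x y xS yS; apply: rm_conn => //.
      move=> u v uS vS; apply: un2; exact: (subsetP (sub k)).
    by apply: cS; [move: xS | move: yS]; rewrite !inE => /andP[].
  - move=> k m; case/set0Pn: (inter k m) => x; rewrite inE => /andP[xk xm].
    by apply/set0Pn; exists (if x == l then l' else x); rewrite inE !memS'.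
case: (pickP (fun k => S k == [set l])) => [k0 /eqP e0|H].
  exists l => m; case/set0Pn: (inter k0 m) => x; rewrite inE e0 inE.
  by case/andP => /eqP ->.
by exists c => k; move: (Hc k); rewrite /S' H !inE => /andP[].
Qed.

Lemma td_meet (T I K : finType) (V : {set T}) (E : rel T) (t : rel I)
    (B : I -> {set T}) (X : K -> {set T}) :
  tree_decomposition V E t B ->
  (forall k, X k \subset V) -> (forall k, X k != set0) -> (forall k, conn_in E (X k)) ->
  (forall k m, k != m -> exists u v, [/\ u \in X k, v \in X m & E u v]) ->
  exists c, forall k, B c :&: X k != set0.
Proof.
case => [[st irr cI conI ecnt] Bsub cover ecover vconn] sX nX cX adj.
pose Tk k := [set i | B i :&: X k != set0].
have base : forall k v i j, v \in X k -> v \in B i -> v \in B j ->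
    connect (rst t (Tk k)) i j.
  move=> k v i j vk vi vj; apply: (connect_sub _ (vconn v i j vi vj)).
  move=> a b /= /andP[/andP[tab va] vb]; apply: connect1.
  rewrite /rst /= tab !inE /=; apply/andP; split; apply/set0Pn; exists v;
    by rewrite inE ?va ?vb vk.
have conT : forall k, conn_in t (Tk k).
  move=> k i j; rewrite !inE => /set0Pn[v]; rewrite inE => /andP[vi vk].
  move=> /set0Pn[w]; rewrite inE => /andP[wj wk].
  case/connectP: (cX k v w vk wk) => p pth ew.
  elim: p v i vk vi pth ew => [|z p IHp] v i vk vi /=.
    by move=> _ ew; apply: (base k v i j vk vi); rewrite -ew.
  case/andP => /andP[/andP[Evz _] zk] pth ew.
  have [c /andP[vc zc]] := ecover v z (subsetP (sX k) v vk) (subsetP (sX k) z zk) Evz.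
  apply: connect_trans (base k v i c vk vi vc) _.
  exact: IHp zk zc pth ew.
have [c Hc] : exists c, forall k, c \in Tk k.
  apply: (@helly I K t st irr (#|I|.-1) setT).
  - by rewrite cardsT prednK.
  - move=> x y _ _; rewrite (@eq_connect _ _ t) //.
    by move=> a b; rewrite /rst /= !inE !andbT.
  - by rewrite /nedges -ecnt; apply: eq_card => p; rewrite !inE !andbT.
  - by move=> k; apply: subsetT.
  - exact: conT.
  - move=> k m; case: (eqVneq k m) => [<-|km].
      rewrite setIid; case/set0Pn: (nX k) => v vk.
      have [i vi] := cover v (subsetP (sX k) v vk).
      by apply/set0Pn; exists i; rewrite !inE; apply/set0Pn; exists v; rewrite inE vi vk.
    have [u [v [uk vm Euv]]] := adj k m km.
    have [i /andP[ui vi]] := ecover u v (subsetP (sX k) u uk) (subsetP (sX m) v vm) Euv.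
    apply/set0Pn; exists i; rewrite !inE; apply/andP; split; apply/set0Pn;
      [exists u | exists v]; rewrite inE ?ui ?uk ?vi ?vm //.
by exists c => k; move: (Hc k); rewrite inE.
Qed.

Lemma no_K4 (T : finType) (V : {set T}) (E : rel T) (X : 'I_4 -> {set T}) :
  (forall k, X k \subset V) -> (forall k, X k != set0) -> (forall k, conn_in E (X k)) ->
  (forall k m, k != m -> exists u v, [/\ u \in X k, v \in X m & E u v]) ->
  (forall k m x, x \in X k -> x \in X m -> k = m) ->
  ~ tw_le V E 2.
Proof.
move=> sX nX cX adj dis [I [t [B [td bnd]]]].
have [c Hc] := td_meet td sX nX cX adj.
have [f Hf] : exists f : 'I_4 -> T, forall k, f k \in B c :&: X k.
  by apply: (@fin_all_exists _ (fun _ => T) (fun k x => x \in B c :&: X k)) => k; apply/set0Pn.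
have finj : injective f.
  move=> k m e; move: (Hf k) (Hf m); rewrite !inE e => /andP[_ h1] /andP[_ h2].
  exact: dis h1 h2.
have : #|[set f k | k in 'I_4]| <= #|B c|.
  apply: subset_leq_card; apply/subsetP => x /imsetP[k _ ->].
  by move: (Hf k); rewrite inE => /andP[].
by rewrite card_imset // card_ord => h; move: (leq_trans h (bnd c)).
Qed.

Definition inX (a b g d k i : nat) : bool :=
  match k with
  | 0 => (a <= i) && (i < b)
  | 1 => (b <= i) && (i < g)
  | 2 => (g <= i) && (i < d)
  | _ => (d <= i) || (i < a)
  end.

Lemma conn_from (T : finType) (H : rel T) (Y : {set T}) r :
  symmetric H -> (forall x, x \in Y -> connect (rst H Y) r x) -> conn_in H Y.
Proof.
move=> sH h x y xY yY; apply: connect_trans (h y yY).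
by rewrite (sym_connect_sym (rst_sym Y sH)); apply: h.
Qed.

Lemma interval_conn (T : finType) (H : rel T) (c : seq T) x0 (Y : {set T}) lo hi :
  hi <= size c -> (forall k, k.+1 < size c -> H (nth x0 c k) (nth x0 c k.+1)) ->
  (forall i, lo <= i < hi -> nth x0 c i \in Y) ->
  forall i, lo <= i < hi -> connect (rst H Y) (nth x0 c lo) (nth x0 c i).
Proof.
move=> hiN adj inY; elim=> [|i IH] /andP[l1 l2].
  by move: l1; rewrite leqn0 => /eqP ->; apply: connect0.
case: (eqVneq lo i.+1) => [->|ne]; first by apply: connect0.
have li : lo <= i by move: l1 ne; rewrite leq_eqVlt => /orP[/eqP ->|]; [rewrite eqxx|].
apply: connect_trans (IH _) _; first by rewrite li; apply: ltnW.
apply: connect1; rewrite /rst /= adj ?inY ?li ?l1 ?l2 //=; first by rewrite ltnW.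
exact: leq_trans l2 hiN.
Qed.

Lemma cycle_K4 (T : finType) (V : {set T}) (H : rel T) (c : seq T) (x0 : T) a b g d :
  symmetric H -> uniq c -> {subset c <= V} ->
  (forall k, k.+1 < size c -> H (nth x0 c k) (nth x0 c k.+1)) ->
  H (nth x0 c (size c).-1) (nth x0 c 0) ->
  a < b -> b < g -> g < d -> d < size c ->
  H (nth x0 c a) (nth x0 c g) -> H (nth x0 c b) (nth x0 c d) ->
  ~ tw_le V H 2.
Proof.
move=> sH uc cV adj wrap ab bg gd dN Hag Hbd.
set N := size c in dN adj wrap.
pose X (k : 'I_4) := [set x in c | inX a b g d k (index x c)].
have memX : forall k i, i < N -> (nth x0 c i \in X k) = inX a b g d k i.
  by move=> k i iN; rewrite inE mem_nth // index_uniq.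
have idxX : forall k x, x \in X k -> x = nth x0 c (index x c) /\ index x c < N.
  move=> k x; rewrite inE => /andP[xc _]; split; first by rewrite nth_index.
  by rewrite index_mem.
apply: (@no_K4 T V H X).
- by move=> k; apply/subsetP => x; rewrite inE => /andP[/cV].
- move=> k; apply/set0Pn.
  case: k => [[|[|[|[|//]]]] ?].
  + by exists (nth x0 c a); rewrite memX /=; lia.
  + by exists (nth x0 c b); rewrite memX /=; lia.
  + by exists (nth x0 c g); rewrite memX /=; lia.
  + by exists (nth x0 c d); rewrite memX /=; lia.
- have gen : forall (k : 'I_4) lo hi, hi <= N ->
      (forall i, i < N -> inX a b g d k i = (lo <= i < hi)) -> lo < hi -> conn_in H (X k).
    move=> k lo hi hiN eX lohi; apply: (conn_from (r := nth x0 c lo)) => // x xX.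
    have [ex iN] := idxX k x xX; rewrite ex.
    apply: (interval_conn hiN adj).
      move=> i /andP[i1 i2]; have iN' : i < N := leq_trans i2 hiN.
      by rewrite memX // eX // i1 i2.
    by rewrite -eX //; move: xX; rewrite inE => /andP[].
  case=> [[|[|[|[|//]]]] ?].
  + by apply: (gen _ a b); [lia|move=> i _; rewrite /= |].
  + by apply: (gen _ b g); [lia|move=> i _; rewrite /= |lia].
  + by apply: (gen _ g d); [lia|move=> i _; rewrite /= |].
  + set k3 := Ordinal _.
    have m3 : forall i, i < N -> (nth x0 c i \in X k3) = (d <= i) || (i < a).
      by move=> i iN; rewrite memX.
    apply: (conn_from (r := nth x0 c d)) => // x xX.
    have [ex iN] := idxX k3 x xX.
    have := xX; rewrite ex m3 // => /orP[di|ia].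
      by apply: interval_conn (leqnn N) adj _ _ _; [move=> i /andP[i1 i2]; rewrite m3 ?i1 | rewrite di].
    apply: (@connect_trans _ _ (nth x0 c N.-1)).
      apply: interval_conn (leqnn N) adj _ _ _.
        by move=> i /andP[i1 i2]; rewrite m3 ?i1.
      apply/andP; split; lia.
    apply: (@connect_trans _ _ (nth x0 c 0)).
      apply: connect1; rewrite /rst /= wrap !m3 /=; try lia.
    apply: (interval_conn (hi := a)) adj _ _ _; first lia.
      by move=> i /andP[i1 i2]; rewrite m3 ?i2 ?orbT //; lia.
    by rewrite ia.
- have adjlt : forall k m : 'I_4, k < m -> exists u v, [/\ u \in X k, v \in X m & H u v].
    have pr : forall i j, j = i.+1 -> i.+1 < N -> H (nth x0 c i) (nth x0 c j).
      by move=> i j ->; apply: adj.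
    case=> [[|[|[|[|//]]]] ?] [[|[|[|[|//]]]] ?] //= _.
    + exists (nth x0 c b.-1), (nth x0 c b); split; [rewrite memX /=; lia|rewrite memX /=; lia|].
      by apply: pr; lia.
    + exists (nth x0 c a), (nth x0 c g); split; [rewrite memX /=; lia|rewrite memX /=; lia|done].
    + case: (posnP a) => [a0|a0].
        exists (nth x0 c 0), (nth x0 c N.-1); split; [rewrite memX /=; lia|rewrite memX /=; lia|].
        by rewrite sH.
      exists (nth x0 c a), (nth x0 c a.-1); split; [rewrite memX /=; lia|rewrite memX /=; lia|].
      by rewrite sH; apply: pr; lia.
    + exists (nth x0 c g.-1), (nth x0 c g); split; [rewrite memX /=; lia|rewrite memX /=; lia|].
      by apply: pr; lia.
    + exists (nth x0 c b), (nth x0 c d); split; [rewrite memX /=; lia|rewrite memX /=; lia|done].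
    + exists (nth x0 c d.-1), (nth x0 c d); split; [rewrite memX /=; lia|rewrite memX /=; lia|].
      by apply: pr; lia.
  move=> k m km; case: (ltngtP k m) => [lt|gt|eq].
  + exact: adjlt.
  + have [u [v [uk vm Huv]]] := adjlt m k gt.
    by exists v, u; split; rewrite // sH.
  + by move: km; rewrite (val_inj eq) eqxx.
- move=> k m x xk xm; apply: val_inj.
  move: xk xm; rewrite !inE => /andP[_ h1] /andP[_ h2].
  move: h1 h2; case: k => [[|[|[|[|//]]]] ?]; case: m => [[|[|[|[|//]]]] ?] /= h1 h2 //; lia.
Qed.

Set Implicit Arguments. Unset Strict Implicit. Unset Printing Implicit Defensive.

Lemma ip_nth (T : finType) (e : rel T) (P : seq T) x0 : induced_path e P ->
  forall k l, k < size P -> l < size P ->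
  e (nth x0 P k) (nth x0 P l) = (k.+1 == l) || (l.+1 == k).
Proof.
case=> _ _ h k l kP lP; have := h (Ordinal kP) (Ordinal lP).
by rewrite !(tnth_nth x0).
Qed.

Lemma in_drop_uniq (T : eqType) (s : seq T) x k : uniq s ->
  (x \in drop k s) = (x \in s) && (k <= index x s).
Proof.
move=> us; case xs: (x \in s); last first.
  by apply/negP => /mem_drop; rewrite xs.
have := us; rewrite -(cat_take_drop k s) cat_uniq => /and3P[_ /hasPn H _].
have xs' : x \in s by rewrite xs.
have := mem_cat x (take k s) (drop k s); rewrite cat_take_drop xs' (in_take k xs').
case: (ltnP (index x s) k) => [lt|ge] /=.
  move=> _; apply/negP => xd; move: (H x xd).
  by rewrite /= (in_take k xs') lt.
by move=> ->.
Qed.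

Lemma cross_edge (T : finType) (R : rel T) (L : {pred T}) a s :
  a \in L -> path R a s -> last a s \notin L ->
  exists x y, [/\ x \in L, y \notin L & R x y].
Proof.
elim: s a => [|z s IH] a aL /=; first by rewrite aL.
case/andP => Raz pz lz; case zL: (z \in L).
  exact: IH zL pz lz.
by exists a, z; rewrite zL.
Qed.

Lemma add2_sym (T : finType) (e : rel T) (S : {set T}) x1 y1 x2 y2 :
  symmetric e -> symmetric (add2edges (induced_rel e S) x1 y1 x2 y2).
Proof.
move=> se u v; rewrite /add2edges /= /induced_rel /= (se u v).
by case: (e v u); case: (u \in S); case: (v \in S); case: (u == x1); case: (v == y1);
  case: (u == y1); case: (v == x1); case: (u == x2); case: (v == y2);
  case: (u == y2); case: (v == x2).
Qed.

Lemma arith4 (m n a b u v : nat) : a < b -> b < m -> u < v -> v < n ->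
  [/\ a < b, b < m + (n - v.+1), m + (n - v.+1) < m + (n - u.+1) & m + (n - u.+1) < m + n].
Proof. move=> *; split; lia. Qed.

Lemma arith_gt (a i : nat) : ~~ (a < i) -> a != i -> i < a.
Proof. move=> *; lia. Qed.

Lemma arith_adj (a b i : nat) : a < i -> ~~ (b < i) -> b != i ->
  (a.+1 == b) || (b.+1 == a) -> False.
Proof. move=> *; lia. Qed.

Unset Implicit Arguments.
Set Strict Implicit.

(* P = p :: Ps = <p_1,...,p_m>, Q = q :: Qs = <q_1,...,q_n>; indices 0-based *)
Theorem mainTheorem13 (T : finType) (e : rel T) (p : T) (Ps : seq T) (q : T) (Qs : seq T) :
  simple_graph e ->
  induced_path e (p :: Ps) ->
  induced_path e (q :: Qs) ->
  [disjoint (p :: Ps) & (q :: Qs)] ->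
  let S := [set x | (x \in p :: Ps) || (x \in q :: Qs)] in
  tw_le S (add2edges (induced_rel e S) p q (last p Ps) (last q Qs)) 2 ->
  forall (i : 'I_(size (p :: Ps))) (j : 'I_(size (q :: Qs))),
    e (tnth (in_tuple (p :: Ps)) i) (tnth (in_tuple (q :: Qs)) j) ->
    separates S (induced_rel e S)
      [set tnth (in_tuple (p :: Ps)) i; tnth (in_tuple (q :: Qs)) j]
      [set x | (x \in take i (p :: Ps)) || (x \in take j (q :: Qs))]
      [set x | (x \in drop i.+1 (p :: Ps)) || (x \in drop j.+1 (q :: Qs))].
Proof.
move=> [se ie] ipP ipQ dPQ S tw i j eij.
set P := p :: Ps in ipP dPQ S tw i j eij *.
set Q := q :: Qs in ipQ dPQ S tw i j eij *.
set H := add2edges _ _ _ _ _ in tw.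
rewrite !(tnth_nth p) /= in eij *.
have uP : uniq P by case: ipP.
have uQ : uniq Q by case: ipQ.
set m := size P in i eij *.
set n := size Q in j eij *.
have m0 : 0 < m by [].
have n0 : 0 < n by [].
have lP : last p Ps = nth p P m.-1 by rewrite nth_last.
have lQ : last q Qs = nth p Q n.-1 by rewrite nth_last.
have eP := ip_nth p ipP; have eQ := ip_nth p ipQ.
have PS : forall k, k < m -> nth p P k \in S by move=> k km; rewrite inE mem_nth.
have QS : forall k, k < n -> nth p Q k \in S by move=> k km; rewrite inE mem_nth ?orbT.
have he : forall u v, u \in S -> v \in S -> e u v -> H u v.
  by move=> u v uS vS euv; rewrite /H /add2edges /= /induced_rel /= euv uS vS.
have sH : symmetric H.
  exact: add2_sym.
pose c := P ++ rev Q.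
have cP : forall k, k < m -> nth p c k = nth p P k.
  by move=> k km; rewrite nth_cat km.
have cQ : forall k, k < n -> nth p c (m + (n - k.+1)) = nth p Q k.
  move=> k kn; rewrite nth_cat ltnNge leq_addr /= addKn nth_rev; last by lia.
  by congr nth; rewrite -/n; lia.
have noK4 : forall a b g d, a < b -> b < g -> g < d -> d < size c ->
    H (nth p c a) (nth p c g) -> H (nth p c b) (nth p c d) -> False.
  move=> a b g d ab bg gd dc Hag Hbd.
  apply: (cycle_K4 (x0 := p) sH _ _ _ _ ab bg gd dc Hag Hbd tw).
  - rewrite cat_uniq rev_uniq uP uQ /= andbT has_rev; apply/hasPn => x xQ.
    apply/negP => xP; move: dPQ; rewrite disjoint_has => /hasPn/(_ x xP).
    by rewrite /= xQ.
  - by move=> x; rewrite mem_cat mem_rev /S in_set.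
  - move=> k; rewrite size_cat size_rev -/m -/n => kc.
    case: (ltnP k.+1 m) => h.
      rewrite !cP //; last by lia.
      by apply: he; [apply: PS; lia|apply: PS|rewrite eP ?eqxx //; lia].
    case: (eqVneq k.+1 m) => [hm|hm].
      have e1 : k.+1 = m + (n - (n.-1).+1) by lia.
      rewrite e1 cQ ?cP; try lia.
      have -> : k = m.-1 by lia.
      by rewrite /H /add2edges /= -lP -lQ !eqxx !orbT.
    pose z := n - (k - m).+2.
    have e2 : k.+1 = m + (n - z.+1) by rewrite /z; lia.
    have e1 : k = m + (n - (z.+1).+1) by rewrite /z; lia.
    rewrite e2 e1 !cQ; try (rewrite /z; lia).
    by apply: he; [apply: QS; rewrite /z; lia|apply: QS; rewrite /z; lia|rewrite eQ ?eqxx ?orbT //; rewrite /z; lia].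
  - rewrite size_cat size_rev -/m -/n.
    have -> : (m + n).-1 = m + (n - 0.+1) by lia.
    by rewrite cQ // cP // /H /add2edges /= !eqxx !orbT.
have disj : forall z, z \in P -> z \in Q -> False.
  move=> z zP zQ; move: dPQ; rewrite disjoint_has => /hasPn/(_ z zP).
  by rewrite /= zQ.
have tP : forall z k, (z \in take k P) = (z \in P) && (index z P < k).
  move=> z k; case zP: (z \in P); first by rewrite in_take.
  by apply/negP => /mem_take; rewrite zP.
have tQ : forall z k, (z \in take k Q) = (z \in Q) && (index z Q < k).
  move=> z k; case zQ: (z \in Q); first by rewrite in_take.
  by apply/negP => /mem_take; rewrite zQ.
have dP : forall z k, (z \in drop k P) = (z \in P) && (k <= index z P).
  by move=> z k; rewrite in_drop_uniq.
have dQ : forall z k, (z \in drop k Q) = (z \in Q) && (k <= index z Q).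
  by move=> z k; rewrite in_drop_uniq.
have im := ltn_ord i; have jn := ltn_ord j.
have sc : size c = m + n by rewrite size_cat size_rev.
move=> a0 b0 aL bR; apply/negP => /connectP[s pth eb].
have bL : b0 \notin [set x | (x \in take i P) || (x \in take j Q)].
  rewrite in_set tP tQ; move: bR; rewrite in_set -[drop i Ps]/(drop i.+1 P) -[drop j Qs]/(drop j.+1 Q) dP dQ.
  case/orP => /andP[bP bi]; last first.
    have bP' : (b0 \in P) = false by apply/negP => /disj/(_ bP).
    by rewrite bP' bP andFb andTb orFb -leqNgt ltnW.
  have bQ : (b0 \in Q) = false by apply/negP => /(disj _ bP).
  by rewrite bP bQ andTb andFb orbF -leqNgt ltnW.
rewrite eb in bL.
have [x [y [xL yL Rxy]]] := cross_edge aL pth bL.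
move: Rxy => /= /andP[/andP[/andP[/andP[exy _] _] xX] yX].
move: xX yX; rewrite !in_setD !in_set2 !negb_or.
move=> /andP[/andP[xpi xqj] xS] /andP[/andP[ypi yqj] yS].
move: xL yL; rewrite !in_set !tP !tQ.
have nP : forall z, z \in P -> nth p P (index z P) = z by move=> z zP; rewrite nth_index.
have nQ : forall z, z \in Q -> nth p Q (index z Q) = z by move=> z zQ; rewrite nth_index.
have iP : forall z, z \in P -> index z P < m by move=> z zP; rewrite index_mem.
have iQ : forall z, z \in Q -> index z Q < n by move=> z zQ; rewrite index_mem.
move: yS; rewrite /S in_set => /orP[yP|yQ].
- have yQ : (y \in Q) = false by apply/negP => /(disj _ yP).
  have yi : index y P != i by apply: contraNneq ypi => <-; rewrite nP.
  have yn := iP y yP.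
  rewrite yP yQ andTb andFb orbF => /orP[/andP[xP xi]|/andP[xQ xj]] yi2.
    have := eP (index x P) (index y P) (iP x xP) yn; rewrite !nP // exy => /esym.
    exact: arith_adj xi yi2 yi.
  have xn := iQ x xQ.
  have [h1 h2 h3 h4] := arith4 (m:=m) (n:=n) (arith_gt yi2 yi) yn xj jn.
  apply: (noK4 i (index y P) (m + (n - j.+1)) (m + (n - (index x Q).+1))) => //; first by rewrite sc.
    by rewrite cP // cQ //; apply: he; [apply: PS|apply: QS|].
  rewrite cP // cQ //; apply: he; [exact: PS yn|exact: QS xn|by rewrite nP // nQ // se].
- have yP : (y \in P) = false by apply/negP => /disj/(_ yQ).
  have yj : index y Q != j by apply: contraNneq yqj => <-; rewrite nQ.
  have yn := iQ y yQ.
  rewrite yP yQ andFb andTb orFb => /orP[/andP[xP xi]|/andP[xQ xj]] yj2.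
    have xm := iP x xP.
    have [h1 h2 h3 h4] := arith4 (m:=m) (n:=n) xi im (arith_gt yj2 yj) yn.
    apply: (noK4 (index x P) i (m + (n - (index y Q).+1)) (m + (n - j.+1))) => //; first by rewrite sc.
      rewrite cP // cQ //; apply: he; [exact: PS xm|exact: QS yn|by rewrite nP // nQ //].
    by rewrite cP // cQ //; apply: he; [apply: PS|apply: QS|].
  have := eQ (index x Q) (index y Q) (iQ x xQ) yn; rewrite !nQ // exy => /esym.
  exact: arith_adj xj yj2 yj.
Qed.
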